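(* Let $K=\mathbb{Q}(\sqrt m)$ be a Deng–Li field and write its fundamental unit as $\varepsilon=a+b\sqrt m$ with $a,b\in\mathbb{Z}$. Then $b$ is odd.
   Context: A Deng–Li field is $K=\mathbb{Q}(\sqrt m)$, $m=\ell_1\ell_2\cdots\ell_n$ with $n\ge 2$ even and $\ell_1,\dots,\ell_n$ distinct primes such that: - $\ell_1\equiv3\pmod8$; - $\ell_i\equiv5\pmod8$ for $i\ge2$; - $\big(\frac{\ell_1}{\ell_2}\big)=-1$, and $\big(\frac{\ell_1}{\ell_j}\big)=1$ for $j\ge3$; - $\big(\frac{\ell_i}{\ell_j}\big)=-1$ for $2\le i<j\le n$ (Legendre symbols). Here $m\equiv7\pmod 8$, the ring of integers is $\mathbb{Z}[\sqrt m]$, and the fundamental unit has norm $1$. *)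

(* Defs.v *)
From Stdlib Require Import ZArith Znumtheory Reals List ClassicalEpsilon.
Open Scope Z_scope.

Definition is_qr (a p : Z) : Prop :=
  exists x : Z, (x * x - a) mod p = 0.

Definition legendre (a p : Z) : Z :=
  if Z.eqb (a mod p) 0 then 0
  else if excluded_middle_informative (is_qr a p) then 1 else -1.

Definition prod_first (l : nat -> Z) (n : nat) : Z :=
  fold_right Z.mul 1 (map l (seq 0 n)).

(* Deng-Li field: m = l_1 ... l_n, where (0-indexed) l 0 = l_1, ..., l (n-1) = l_n *)
Definition deng_li (m : Z) : Prop :=
  exists (n : nat) (l : nat -> Z),
    (2 <= n)%nat /\ Nat.Even n /\
    (forall i, (i < n)%nat -> prime (l i)) /\
    (forall i j, (i < n)%nat -> (j < n)%nat -> i <> j -> l i <> l j) /\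
    l 0%nat mod 8 = 3 /\
    (forall i, (1 <= i < n)%nat -> l i mod 8 = 5) /\
    legendre (l 0%nat) (l 1%nat) = -1 /\
    (forall j, (3 <= S j <= n)%nat -> legendre (l 0%nat) (l j) = 1) /\
    (forall i j, (1 <= i)%nat -> (i < j)%nat -> (j < n)%nat -> legendre (l i) (l j) = -1) /\
    m = prod_first l n.

Open Scope R_scope.

(* x lies in Z[sqrt m] (the ring of integers of Q(sqrt m) here), viewed inside R *)
Definition in_Zsqrt (m : Z) (x : R) : Prop :=
  exists a b : Z, x = IZR a + IZR b * sqrt (IZR m).

Definition is_unit_Zsqrt (m : Z) (x : R) : Prop :=
  in_Zsqrt m x /\ exists y : R, in_Zsqrt m y /\ x * y = 1.

Definition fundamental_unit (m : Z) (eps : R) : Prop :=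
  is_unit_Zsqrt m eps /\ 1 < eps /\
  forall u : R, is_unit_Zsqrt m u -> 1 < u -> eps <= u.

(* Main.v *)
Require Import Defs.
From Stdlib Require Import ZArith Reals Znumtheory Lia Lra Psatz ClassicalEpsilon.


Open Scope Z_scope.

Lemma Z_split2 (r : Z) : exists h e, r = 2 * h + e /\ 0 <= e <= 1.
Proof.
exists (r / 2), (r mod 2). split.
- apply Z_div_mod_eq_full.
- pose proof (Z.mod_pos_bound r 2). lia.
Qed.

Lemma no_sq_m (m : Z) : m mod 4 = 3 -> forall s r, r * r = m * (s * s) -> s = 0.
Proof.
intros Hm.
assert (Hm' : exists u, m = 4 * u + 3).
{ exists (m / 4). pose proof (Z_div_mod_eq_full m 4). lia. }
destruct Hm' as [u Hu].
assert (H : forall k : nat, forall s r, Z.abs s < Z.of_nat k -> r * r = m * (s * s) -> s = 0).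
{ induction k as [|k IH]; intros s r Hk E; [lia|].
  destruct (Z_split2 s) as [h [e [Hs He]]].
  destruct (Z_split2 r) as [g [f [Hr Hf]]].
  subst m s r.
  assert (e = 0 \/ e = 1) as [-> | ->] by lia; [| assert (f = 0 \/ f = 1) as [-> | ->] by lia; lia].
  assert (f = 0 \/ f = 1) as [-> | ->] by lia; [| lia].
  destruct (Z.eq_dec h 0) as [-> | hn0]; [lia|].
  assert (h = 0) by (apply (IH h g); lia). lia. }
intros s r E. apply (H (S (Z.to_nat (Z.abs s))) s r); lia.
Qed.

Lemma mod8_4 x : x mod 8 = 3 -> x mod 4 = 3.
Proof.
intros. pose proof (Z.div_mod x 8 ltac:(lia)). pose proof (Z.mod_pos_bound x 8 ltac:(lia)).
pose proof (Z.div_mod x 4 ltac:(lia)). pose proof (Z.mod_pos_bound x 4 ltac:(lia)). lia.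
Qed.

Lemma mod8_4' x : x mod 8 = 5 -> x mod 4 = 1.
Proof.
intros. pose proof (Z.div_mod x 8 ltac:(lia)). pose proof (Z.mod_pos_bound x 8 ltac:(lia)).
pose proof (Z.div_mod x 4 ltac:(lia)). pose proof (Z.mod_pos_bound x 4 ltac:(lia)). lia.
Qed.

Open Scope R_scope.

Lemma sqrt_sq (m : Z) : (0 <= m)%Z -> sqrt (IZR m) * sqrt (IZR m) = IZR m.
Proof. intros. apply sqrt_sqrt. apply IZR_le. lia. Qed.

Lemma irr_R (m r s : Z) : (m mod 4 = 3)%Z -> (0 <= m)%Z ->
  IZR r + IZR s * sqrt (IZR m) = 0 -> s = 0%Z.
Proof.
intros Hm Hm0 E.
apply (no_sq_m m Hm s r).
apply eq_IZR. rewrite !mult_IZR.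
assert (IZR r = - IZR s * sqrt (IZR m)) as -> by lra.
pose proof (sqrt_sq m Hm0). nra.
Qed.

Lemma unit_norm (m a b : Z) : (m mod 4 = 3)%Z -> (0 < m)%Z ->
  is_unit_Zsqrt m (IZR a + IZR b * sqrt (IZR m)) -> (a * a - m * (b * b) = 1)%Z.
Proof.
intros Hm Hm0 [_ [y [[c [d ->]] Hy]]].
set (t := sqrt (IZR m)) in *.
assert (Ht : t * t = IZR m) by (apply sqrt_sq; lia).
assert (E : IZR (a * c + m * (b * d) - 1) + IZR (a * d + b * c) * t = 0).
{ rewrite minus_IZR, !plus_IZR, !mult_IZR. rewrite <- Ht. nra. }
assert (E2 : (a * d + b * c = 0)%Z) by (apply (irr_R m (a * c + m * (b * d) - 1) (a * d + b * c) Hm); [lia | exact E]).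
rewrite E2, Rmult_0_l, Rplus_0_r in E. apply eq_IZR in E.
assert (Hn : ((a * a - m * (b * b)) * (c * c - m * (d * d)) = 1)%Z).
{ replace ((a * a - m * (b * b)) * (c * c - m * (d * d)))%Z
    with ((a * c + m * (b * d)) * (a * c + m * (b * d)) - m * ((a * d + b * c) * (a * d + b * c)))%Z by ring.
  rewrite E2. assert (a * c + m * (b * d) = 1)%Z as -> by lia. lia. }
apply Z.eq_mul_1 in Hn. destruct Hn as [Hn | Hn]; [exact Hn|].
exfalso.
assert (Hm' : exists u, m = (4 * u + 3)%Z).
{ exists (m / 4)%Z. pose proof (Z_div_mod_eq_full m 4). lia. }
destruct Hm' as [u Hu].
destruct (Z_split2 a) as [h [e [Ha He]]].
destruct (Z_split2 b) as [g [f [Hb Hf]]].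
subst m a b.
assert (e = 0 \/ e = 1)%Z as [-> | ->] by lia; assert (f = 0 \/ f = 1)%Z as [-> | ->] by lia; lia.
Qed.

Lemma unit_pos (m a b : Z) : (0 < m)%Z -> (a * a - m * (b * b) = 1)%Z ->
  1 < IZR a + IZR b * sqrt (IZR m) -> (1 <= a)%Z /\ (1 <= b)%Z.
Proof.
intros Hm0 N H.
set (t := sqrt (IZR m)) in *.
assert (Ht : t * t = IZR m) by (apply sqrt_sq; lia).
assert (Htp : 0 < t) by (apply sqrt_lt_R0; apply IZR_lt; lia).
assert (Ef : (IZR a + IZR b * t) * (IZR a - IZR b * t) = 1).
{ replace 1 with (IZR 1) by reflexivity. rewrite <- N.
  rewrite minus_IZR, !mult_IZR. rewrite <- Ht. ring. }
assert (Hf : 0 < IZR a - IZR b * t) by nra.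
assert (Hf1 : IZR a - IZR b * t < 1) by nra.
split.
- destruct (Z_le_gt_dec 1 a) as [|Ha]; [assumption|].
  assert (IZR a <= 0) by (apply IZR_le; lia). lra.
- destruct (Z_le_gt_dec 1 b) as [|Hb]; [assumption|].
  assert (IZR b <= 0) by (apply IZR_le; lia). nra.
Qed.

Lemma unit_of_pell (m x y : Z) : (0 < m)%Z -> (x * x - m * (y * y) = 1)%Z ->
  is_unit_Zsqrt m (IZR x + IZR y * sqrt (IZR m)).
Proof.
intros Hm0 N. split; [exists x, y; reflexivity|].
exists (IZR x + IZR (- y) * sqrt (IZR m)). split; [exists x, (- y)%Z; reflexivity|].
set (t := sqrt (IZR m)).
assert (Ht : t * t = IZR m) by (apply sqrt_sq; lia).
replace 1 with (IZR 1) by reflexivity. rewrite <- N.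
rewrite opp_IZR, minus_IZR, !mult_IZR. rewrite <- Ht. ring.
Qed.

Lemma final_contra (m a b x y : Z) :
  fundamental_unit m (IZR a + IZR b * sqrt (IZR m)) -> (0 < m)%Z ->
  (1 <= x)%Z -> (1 <= y)%Z -> (x * x - m * (y * y) = 1)%Z ->
  a = (x * x + m * (y * y))%Z -> b = (2 * x * y)%Z -> False.
Proof.
intros [_ [H1 Hmin]] Hm0 Hx Hy N Ha Hb.
set (t := sqrt (IZR m)) in *.
assert (Ht : t * t = IZR m) by (apply sqrt_sq; lia).
assert (Htp : 0 < t) by (apply sqrt_lt_R0; apply IZR_lt; lia).
assert (Hu : 1 < IZR x + IZR y * t).
{ assert (1 <= IZR x) by (apply IZR_le; lia). assert (1 <= IZR y) by (apply IZR_le; lia). nra. }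
assert (Hle := Hmin _ (unit_of_pell m x y Hm0 N) Hu).
assert (Eq : IZR a + IZR b * t = (IZR x + IZR y * t) * (IZR x + IZR y * t)).
{ rewrite Ha, Hb, plus_IZR, !mult_IZR. rewrite <- Ht. ring. }
fold t in Hle. rewrite Eq in Hle. nra.
Qed.

Close Scope R_scope.
Close Scope Z_scope.

From mathcomp Require Import all_boot all_order all_algebra all_fingroup all_solvable all_field.
From mathcomp Require Import zify ring.
Set Implicit Arguments. Unset Strict Implicit. Unset Printing Implicit Defensive.
Import GRing.Theory.

Module MC.
Local Open Scope ring_scope.
Section Euler.
Variable p : nat.
Hypothesis pr_p : prime p.
Hypothesis p_odd : odd p.
Local Notation h := (p.-1 %/ 2)%N.

Lemma p_gt2 : (2 < p)%N.
Proof. have := prime_gt1 pr_p. case: p p_odd => [|[|[|n]]] //. Qed.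

Lemma h_double : (h + h = p.-1)%N.
Proof. have := p_gt2. have := modn2 p. rewrite p_odd /=. lia. Qed.

Lemma h_gt0 : (0 < h)%N.
Proof. have := h_double; have := p_gt2. lia. Qed.

Lemma fermatF (x : 'F_p) : x != 0 -> x ^+ p.-1 = 1.
Proof.
move=> x0. have e := expf_card x. rewrite card_Fp // in e.
have : x ^+ p.-1.+1 = x by rewrite prednK // prime_gt0.
rewrite exprS mulrC => E. apply: (mulIf x0). by rewrite E mul1r.
Qed.

Lemma halfpow_sq (x : 'F_p) : x != 0 -> (x ^+ h) ^+ 2 = 1.
Proof. by move=> x0; rewrite -exprM muln2 -addnn h_double fermatF. Qed.

Lemma halfpow_pm1 (x : 'F_p) : x != 0 -> x ^+ h = 1 \/ x ^+ h = -1.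
Proof. move=> /halfpow_sq /eqP; rewrite sqrf_eq1 => /orP[] /eqP; tauto. Qed.

Lemma euler_sq (x y : 'F_p) : y * y = x -> x != 0 -> x ^+ h = 1.
Proof.
move=> <- x0. have y0 : y != 0 by apply: contra x0 => /eqP ->; rewrite mul0r.
by rewrite -expr2 -exprM mul2n -addnn h_double fermatF.
Qed.

Lemma natFp_eq (i j : nat) : (i < p)%N -> (j < p)%N -> (i%:R == j%:R :> 'F_p) = (i == j).
Proof.
move=> ip jp. apply/eqP/eqP => [E|->//].
have := congr1 (@nat_of_ord _) E. by rewrite !val_Fp_nat // !modn_small.
Qed.

Lemma natFp_eq0 (i : nat) : (i%:R == 0 :> 'F_p) = (p %| i)%N.
Proof.
apply/eqP/idP => [E|d].
  have := congr1 (@nat_of_ord _) E. rewrite val_Fp_nat //= => /eqP. by rewrite -/(dvdn p i).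
by rewrite -Fp_nat_mod // (eqP d).
Qed.

Lemma sq_inj (i j : nat) : (0 < i <= h)%N -> (0 < j <= h)%N ->
  (i%:R : 'F_p) ^+ 2 = (j%:R) ^+ 2 -> i = j.
Proof.
move=> /andP[i0 ih] /andP[j0 jh] /eqP. rewrite -subr_eq0 subr_sqr mulf_eq0.
have hd := h_double.
case/orP => [|]; first by rewrite subr_eq0 natFp_eq; [move/eqP| lia | lia].
rewrite -natrD natFp_eq0 => /dvdn_leq. lia.
Qed.

Lemma euler_nsq (x : 'F_p) : x != 0 -> ~ (exists y, y * y = x) -> x ^+ h = -1.
Proof.
move=> x0 nsq. case: (halfpow_pm1 x0) => // xh.
pose rs := x :: [seq (i%:R : 'F_p) ^+ 2 | i <- iota 1 h].
have := @max_unity_roots _ h rs h_gt0.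
have -> : all h.-unity_root rs.
  apply/allP => z; rewrite inE => /orP[/eqP ->|/mapP[i]]; first by rewrite unity_rootE xh.
  rewrite mem_iota => /andP[i1 ih] ->. rewrite unity_rootE.
  apply/eqP; apply: (euler_sq (y := i%:R)); first by rewrite expr2.
  rewrite expf_eq0 /= natFp_eq0. apply/negP => /dvdn_leq. have := h_double. lia.
have -> : uniq rs.
  rewrite /= map_inj_in_uniq ?iota_uniq ?andbT.
    apply/mapP => -[i _ E]. apply: nsq. exists (i%:R). by rewrite E expr2.
  move=> i j; rewrite !mem_iota => ? ? ?; apply: sq_inj => //; lia.
by rewrite /= size_map size_iota ltnn => /(_ isT isT).
Qed.

Lemma nonresidue_exists : exists r : 'F_p, r != 0 /\ r ^+ h != 1.
Proof.
pose rs := [seq (i%:R : 'F_p) | i <- iota 1 p.-1].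
have : ~~ all h.-unity_root rs.
  apply/negP => A. have := @max_unity_roots _ h rs h_gt0 A.
  have -> : uniq rs.
    rewrite map_inj_in_uniq ?iota_uniq //.
    move=> i j; rewrite !mem_iota => ? ? /eqP; rewrite natFp_eq; [by move/eqP| |]; lia.
  rewrite size_map size_iota. have := h_double; have := h_gt0. lia.
case/allPn => z /mapP[i]; rewrite mem_iota => /andP[i1 ip] -> nu.
exists i%:R; split; last by rewrite -unity_rootE.
rewrite natFp_eq0; apply/negP => /dvdn_leq; lia.
Qed.

Lemma oneFp_neq_m1 : (1 : 'F_p) != -1.
Proof.
rewrite -subr_eq0 opprK -mulr2n -(dvdn_pcharf (pchar_Fp pr_p)). apply/negP => /(dvdn_leq (isT : (0 < 2)%N)) H.
have := prime_gt1 pr_p. have : p != 2%N by apply/eqP => E; move: p_odd; rewrite E.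
lia.
Qed.

End Euler.
Section Gauss.
Variables p q : nat.
Hypotheses (pr_p : prime p) (pr_q : prime q) (p_odd : odd p) (q_odd : odd q) (pq : p != q).
Variable F : finFieldType.
Hypothesis chF : q \in [pchar F].
Variable z : F.
Hypothesis zp : p.-primitive_root z.
Local Notation h := (p.-1 %/ 2)%N.

Definition E (x : 'F_p) : F := z ^+ (x : nat).

Lemma E_add (x y : 'F_p) : E (x + y) = E x * E y.
Proof.
rewrite /E -exprD.
have -> : nat_of_ord (x + y)%R = ((nat_of_ord x + nat_of_ord y) %% p)%N.
  by rewrite /=; congr (modn _ _); apply: Fp_cast.
by rewrite prim_expr_mod.
Qed.

Lemma E0 : E 0 = 1.
Proof. by rewrite /E expr0. Qed.

Lemma E_muln (x : 'F_p) n : E (x * n%:R) = E x ^+ n.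
Proof.
elim: n => [|n IH]; first by rewrite mulr0 E0 expr0.
by rewrite mulr_natr mulrS E_add -mulr_natr IH exprS.
Qed.

Definition chi (x : 'F_p) : F := if x == 0 then 0 else if x ^+ h == 1 then 1 else -1.

Lemma two_neq0 : (2%:R : F) != 0.
Proof.
rewrite -(dvdn_pcharf chF). apply/negP => /(dvdn_leq (isT : (0 < 2)%N)) H.
have := prime_gt1 pr_q. have : q != 2%N by apply/eqP => E; move: q_odd; rewrite E.
lia.
Qed.

Lemma oneF_neq_m1 : (1 : F) != -1.
Proof. by rewrite -subr_eq0 opprK -mulr2n two_neq0. Qed.



Lemma chi0 : chi 0 = 0.
Proof. by rewrite /chi eqxx. Qed.

Lemma chi_nz x : x != 0 -> chi x = 1 \/ chi x = -1.
Proof. rewrite /chi => /negbTE ->. case: ifP; tauto. Qed.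

Lemma chiM x y : chi (x * y) = chi x * chi y.
Proof.
have [->|x0] := eqVneq x 0; first by rewrite mul0r chi0 mul0r.
have [->|y0] := eqVneq y 0; first by rewrite mulr0 chi0 mulr0.
rewrite /chi mulf_eq0 (negbTE x0) (negbTE y0) exprMn /=.
have n1 := oneFp_neq_m1 pr_p p_odd.
case: (halfpow_pm1 pr_p p_odd x0) => ->; case: (halfpow_pm1 pr_p p_odd y0) => ->;
  rewrite ?mulr1 ?mul1r ?mulrNN ?mulr1 ?eqxx ?mulN1r ?mulrN1 //
  ?(eq_sym (-1)) (negbTE n1) ?mulrNN ?mulr1 ?mul1r //.
Qed.

Lemma chi_sq x : x != 0 -> chi x * chi x = 1.
Proof. by case/chi_nz => ->; rewrite ?mulr1 ?mulrNN ?mulr1. Qed.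

Lemma chi1 : chi 1 = 1.
Proof. by rewrite /chi oner_eq0 expr1n eqxx. Qed.

Lemma chiV x : chi (x^-1) = chi x.
Proof.
have [->|x0] := eqVneq x 0; first by rewrite invr0.
have : chi x * chi (x^-1) = 1 by rewrite -chiM mulfV // chi1.
move=> H. by rewrite -[chi x^-1]mul1r -(chi_sq x0) -mulrA H mulr1.
Qed.


Lemma chi_sum : \sum_x chi x = 0.
Proof.
have [r [r0 rh]] := nonresidue_exists pr_p p_odd.
have cr : chi r = -1 by rewrite /chi (negbTE r0) (negbTE rh).
have H : \sum_x chi x = - \sum_x chi x.
  rewrite {1}(reindex_inj (mulfI r0)) /=.
  under eq_bigr => i _ do rewrite chiM cr mulN1r.
  by rewrite sumrN.
have : (\sum_x chi x) * 2%:R = 0.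
  by rewrite mulr_natr mulr2n {1}H addNr.
by move/eqP; rewrite mulf_eq0 (negbTE two_neq0) orbF => /eqP.
Qed.

Definition g := \sum_x chi x * E x.

Lemma G_eq u : u != 0 -> \sum_x chi x * E (x * u) = chi u * g.
Proof.
move=> u0. rewrite (reindex_inj (mulIf (invr_neq0 u0))) /= /g mulr_sumr.
apply: eq_bigr => x _. by rewrite mulrVK ?unitfE // chiM chiV mulrCA mulrA.
Qed.

Lemma sumE : \sum_(x : 'F_p) E x = 0.
Proof.
have z1 : z != 1.
  apply/eqP => z1. have := prim_order_dvd zp 1. rewrite z1 expr1n eqxx.
  move/dvdn_leq => /(_ isT). have := prime_gt1 pr_p. lia.
have : (z - 1) * \sum_(i < (Zp_trunc (pdiv p)).+2) z ^+ i = 0.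
  by rewrite -subrX1 Fp_cast // prim_expr_order // subrr.
move/eqP; rewrite mulf_eq0 subr_eq0 (negbTE z1) /= => /eqP.
by [].
Qed.

Lemma orth s : \sum_(x : 'F_p) E (x * s) = if s == 0 then p%:R else 0.
Proof.
have [->|s0] := eqVneq s 0.
  under eq_bigr => x _ do rewrite mulr0 E0.
  by rewrite sumr_const card_Fp.
rewrite (reindex_inj (mulIf (invr_neq0 s0))) /=.
under eq_bigr => x _ do rewrite mulrVK ?unitfE //.
exact: sumE.
Qed.



Lemma g2 : g * g = chi (-1) * p%:R.
Proof.
rewrite {1}/g mulr_suml.
transitivity (\sum_(a : 'F_p) \sum_(t : 'F_p) chi a * chi a * (chi t * E (a * (1 + t)))).
  apply: eq_bigr => a _. rewrite /g mulr_sumr.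
  have [->|a0] := eqVneq a 0.
    rewrite chi0 !mul0r. transitivity (0 : F).
      by apply: big1 => t _; rewrite mul0r.
    by symmetry; apply: big1 => t _; rewrite mul0r.
  rewrite (reindex_inj (mulfI a0)) /=. apply: eq_bigr => t _.
  rewrite chiM mulrDr mulr1 E_add. ring.
rewrite exchange_big /=.
transitivity (\sum_(t : 'F_p) chi t * (\sum_(a : 'F_p) E (a * (1 + t)) - 1)).
  apply: eq_bigr => t _.
  rewrite (bigD1 0) //= [in RHS](bigD1 0) //= chi0 !mul0r add0r E0 addrC addrK.
  rewrite mulr_sumr. apply: eq_bigr => a a0. by rewrite (chi_sq a0) mul1r.
under eq_bigr => t _ do rewrite orth mulrBr mulr1.
rewrite sumrB chi_sum subr0 (bigD1 (-1)) //= addrN eqxx big1 ?addr0 //.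
move=> t tm1. rewrite ifF ?mulr0 //. apply/negbTE. by rewrite addrC addr_eq0.
Qed.

Lemma chi_powq x : chi x ^+ q = chi x.
Proof.
have [->|x0] := eqVneq x 0; first by rewrite chi0 expr0n; case: q pr_q.
case: (chi_nz x0) => ->; first by rewrite expr1n.
by rewrite -signr_odd q_odd expr1.
Qed.

Lemma qFp_neq0 : (q%:R : 'F_p) != 0.
Proof.
by rewrite -(dvdn_pcharf (pchar_Fp pr_p)) dvdn_prime2 // eq_sym.
Qed.

Lemma gq : g ^+ q = chi (q%:R) * g.
Proof.
rewrite -(pFrobenius_autE chF) /g rmorph_sum /= -(G_eq qFp_neq0).
apply: eq_bigr => a _. by rewrite rmorphM /= !pFrobenius_autE chi_powq E_muln.
Qed.

Lemma nat_eq1_pchar (R : nzRingType) (r n : nat) : r \in [pchar R] -> (0 < n)%N ->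
  (n%:R == 1 :> R) = (r %| n.-1)%N.
Proof.
move=> chR n0. rewrite (dvdn_pcharf chR) -subr_eq0.
have -> : (n%:R : R) = n.-1%:R + 1 by rewrite natr1 prednK.
by rewrite addrK.
Qed.

Lemma qr_sect : (p %% 4 = 1)%N ->
  ((q%:R : 'F_p) ^+ h == 1) = ((p%:R : 'F_q) ^+ (q.-1 %/ 2) == 1).
Proof.
move=> p4.
have cm1 : chi (-1) = 1.
  rewrite /chi oppr_eq0 oner_eq0.
  have -> : h = (2 * (h %/ 2))%N by have := prime_gt1 pr_p; lia.
  by rewrite exprM sqrrN expr1n expr1n eqxx.
have gg := g2. rewrite cm1 mul1r in gg.
have p0 : (p%:R : F) != 0.
  by rewrite -(dvdn_pcharf chF) dvdn_prime2 // eq_sym.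
have g0 : g != 0.
  by apply: contra p0 => /eqP g0; rewrite -gg g0 mul0r.
set hq := (q.-1 %/ 2)%N.
have Hq : g ^+ q = g * (p%:R) ^+ hq.
  have -> : q = (2 * hq).+1 by rewrite /hq; have := prime_gt1 pr_q; have := modn2 q; rewrite q_odd /=; lia.
  by rewrite exprS exprM expr2 gg mulrC.
rewrite gq mulrC in Hq. have {Hq} Hc := mulfI g0 Hq.
have qp0 : (p%:R : 'F_q) != 0 by rewrite -(dvdn_pcharf (pchar_Fp pr_q)) dvdn_prime2 // eq_sym.
rewrite -[in RHS]natrX (nat_eq1_pchar (pchar_Fp pr_q)) ?expn_gt0 ?prime_gt0 //.
rewrite -(nat_eq1_pchar chF) ?expn_gt0 ?prime_gt0 // natrX -Hc.
rewrite /chi (negbTE qFp_neq0). case: ifP => _; first by rewrite eqxx.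
by rewrite eq_sym (negbTE oneF_neq_m1).
Qed.

End Gauss.

Lemma exists_prim_field p q : prime p -> prime q -> p != q ->
  exists F : finFieldType, q \in [pchar F] /\ exists z : F, p.-primitive_root z.
Proof.
move=> pr_p pr_q pq.
have k0 : (0 < p.-1)%N by have := prime_gt1 pr_p; lia.
case: (pPrimePowerField pr_q k0) => Fm chFm cardFm.
exists Fm; split => //.
set N := #|Fm|.-1.
have ferm (x : Fm) : x != 0 -> x ^+ N = 1.
  move=> x0. have e := expf_card x.
  have : x ^+ N.+1 = x by rewrite /N prednK // cardFm expn_gt0 prime_gt0.
  rewrite exprS mulrC => E. apply: (mulIf x0). by rewrite E mul1r.
have N0 : (0 < N)%N.
  rewrite /N cardFm. have := @ltn_exp2l q 0 p.-1 (prime_gt1 pr_q). rewrite expn0 k0 => H.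
  lia.
have pN : (p %| N)%N.
  have qF : (q%:R : 'F_p) != 0 by rewrite -(dvdn_pcharf (pchar_Fp pr_p)) dvdn_prime2 // eq_sym.
  have := fermatF pr_p qF. rewrite -natrX => /eqP.
  by rewrite (nat_eq1_pchar (pchar_Fp pr_p)) ?expn_gt0 ?prime_gt0 // /N cardFm.
have Np : (0 < N %/ p)%N by rewrite divn_gt0 ?prime_gt0 // dvdn_leq.
pose rs := enum (predC1 (0 : Fm)).
have : ~~ all (N %/ p).-unity_root rs.
  apply/negP => A. have := @max_unity_roots _ (N %/ p) rs Np A (enum_uniq _).
  rewrite -cardE cardC1 -/N. rewrite leqNgt ltn_Pdiv ?prime_gt1 //.
case/allPn => x; rewrite mem_enum /= => x0 xn.
rewrite unity_rootE in xn.
set w := x ^+ (N %/ p) in xn.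
have wp : w ^+ p = 1 by rewrite /w -exprM divnK // ferm.
case: (prim_order_exists (prime_gt0 pr_p) wp) => m mw dm.
case/primeP: pr_p => _ /(_ m dm) /orP[] /eqP Em.
  move: mw; rewrite Em => /prim_expr_order. rewrite expr1 => w1. by rewrite w1 eqxx in xn.
by exists w; rewrite -Em.
Qed.

Theorem qr_power p q : prime p -> prime q -> odd p -> odd q -> p != q -> (p %% 4 = 1)%N ->
  ((q%:R : 'F_p) ^+ (p.-1 %/ 2) == 1) = ((p%:R : 'F_q) ^+ (q.-1 %/ 2) == 1).
Proof.
move=> pr_p pr_q op oq pq p4.
case: (exists_prim_field pr_p pr_q pq) => F [chF [z zp]].
exact: (qr_sect pr_p pr_q op oq pq chF zp p4).
Qed.

Lemma prod_m1 (R : pzRingType) (r : seq nat) (P : pred nat) (f : nat -> R) :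
  (forall i, i \in r -> P i -> f i = -1) -> \prod_(i <- r | P i) f i = (-1) ^+ count P r.
Proof.
elim: r => [|x r IH] H; first by rewrite big_nil expr0.
rewrite big_cons /=. rewrite IH; last by move=> i ir Pi; apply: H => //; rewrite inE ir orbT.
case: ifP => Px; last by rewrite add0n.
by rewrite H ?inE ?eqxx // add1n exprS.
Qed.

Lemma m1_pow_eq1 p k : prime p -> odd p -> (((-1 : 'F_p) ^+ k) == 1) = ~~ odd k.
Proof.
move=> pr po. rewrite -signr_odd. case: (odd k); last by rewrite expr0 eqxx.
by rewrite expr1 eq_sym (negbTE (oneFp_neq_m1 pr po)).
Qed.

Lemma prod_mod4 (r : seq nat) (P : pred nat) (f : nat -> nat) :
  (forall i, i \in r -> P i -> f i %% 4 = 1)%N -> (\prod_(i <- r | P i) f i %% 4 = 1)%N.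
Proof.
elim: r => [|x r IH] H; first by rewrite big_nil.
rewrite big_cons. have IH' : (\prod_(i <- r | P i) f i %% 4 = 1)%N.
  by apply: IH => i ir; apply: H; rewrite inE ir orbT.
case: ifP => Px //. by rewrite -modnMm IH' H ?inE ?eqxx.
Qed.

Lemma mem_behead' (x i : nat) r : i \in r -> i \in x :: r.
Proof. by rewrite inE => ->; rewrite orbT. Qed.

Lemma dvd_prod_primes (r : seq nat) (P : pred nat) (f : nat -> nat) (A : nat) :
  uniq r -> {in r &, injective f} ->
  (forall i, i \in r -> P i -> prime (f i) /\ (f i %| A)%N) ->
  (\prod_(i <- r | P i) f i %| A)%N.
Proof.
elim: r => [|x r IH] ur finj H; first by rewrite big_nil dvd1n.
move: ur => /= /andP[xr ur].
have IH' : (\prod_(i <- r | P i) f i %| A)%N.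
  apply: IH => //; first by move=> i j ir jr; apply: finj; rewrite inE ?ir ?jr orbT.
  by move=> i ir Pi; apply: H => //; rewrite inE ir orbT.
rewrite big_cons. case: ifP => Px //.
have [prx dx] := H x (mem_head _ _) Px.
rewrite Gauss_dvd ?dx ?IH' // prime_coprime // Euclid_dvd_prod //.
rewrite big_seq_cond big1 // => i /andP[ir Pi].
have [pri _] := H i (mem_behead' x ir) Pi.
rewrite dvdn_prime2 //. apply/negbTE/negP => /eqP E.
have xi := finj x i (mem_head _ _) (mem_behead' x ir) E.
by rewrite xi ir in xr.
Qed.

Lemma sq_of_coprime X Y c : (0 < X)%N -> coprime X Y -> (X * Y = c ^ 2)%N -> exists x, X = (x ^ 2)%N.
Proof.
move=> X0 cXY E. set g := gcdn X c.
have g0 : (0 < g)%N by rewrite gcdn_gt0 X0.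
set X' := (X %/ g)%N. set c' := (c %/ g)%N.
have HX : X = (X' * g)%N by rewrite divnK // dvdn_gcdl.
have Hc : c = (c' * g)%N by rewrite divnK // dvdn_gcdr.
have cop : coprime X' c'.
  have : (gcdn X' c' * g = 1 * g)%N by rewrite muln_gcdl -HX -Hc mul1n.
  by move/eqP; rewrite eqn_pmul2r // => /eqP.
have E' : (X' * Y = g * c' ^ 2)%N.
  apply/eqP; rewrite -(eqn_pmul2r g0). apply/eqP.
  move: E. rewrite {1}HX Hc. move=> E.
  transitivity (X' * g * Y)%N; first ring. rewrite E; ring.
have d1 : (X' %| g)%N.
  have : (X' %| g * c' ^ 2)%N by rewrite -E' dvdn_mulr.
  by rewrite Gauss_dvdl // coprimeXr.
have d2 : (g %| X')%N.
  have : (g %| X' * Y)%N by rewrite E' dvdn_mulr.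
  rewrite Gauss_dvdl //. apply: coprime_dvdl cXY. exact: dvdn_gcdl.
have : X' = g by apply/eqP; rewrite eqn_dvd d1 d2.
move=> Xg. exists g. by rewrite HX Xg.
Qed.

Section Cgen.
Variable p : nat.
Hypotheses (pr_p : prime p) (p_odd : odd p) (p4 : (p %% 4 = 1)%N).
Local Notation h := (p.-1 %/ 2)%N.

Lemma m1_pow_h : (-1 : 'F_p) ^+ h = 1.
Proof.
have -> : h = (2 * (h %/ 2))%N by have := prime_gt1 pr_p; lia.
by rewrite exprM sqrrN expr1n expr1n.
Qed.

Lemma C_gen (d x : nat) (e : 'F_p) : e = 1 \/ e = -1 -> (d * x ^ 2)%:R = e ->
  (d%:R : 'F_p) ^+ h = 1.
Proof.
move=> He Hd.
have e0 : e != 0 by case: He => ->; rewrite ?oppr_eq0 oner_eq0.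
have x0 : (x%:R : 'F_p) != 0.
  apply: contra e0 => /eqP x0. by rewrite -Hd natrM natrX x0 expr0n mulr0.
have := congr1 (fun t => t ^+ h) Hd. rewrite /= natrM natrX exprMn -exprM.
rewrite mul2n -addnn h_double // fermatF // mulr1 => ->.
by case: He => ->; rewrite ?expr1n ?m1_pow_h.
Qed.

End Cgen.

Lemma sq_mod4 x : ((x ^ 2) %% 4 = 0 \/ (x ^ 2) %% 4 = 1)%N.
Proof.
rewrite -modnXm. have : (x %% 4 < 4)%N by rewrite ltn_pmod.
case: (x %% 4)%N => [|[|[|[|]]]] //= _; by [left|right].
Qed.

Lemma mod4_contra a b x y : (a %% 4 = 3)%N -> (b %% 4 = 1)%N -> (a * x ^ 2 = (b * y ^ 2).+1)%N -> False.
Proof.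
move=> Ha Hb E.
have E1 : ((a * x ^ 2) %% 4 = (3 * (x ^ 2 %% 4)) %% 4)%N by rewrite -modnMm Ha.
have E2 : ((b * y ^ 2).+1 %% 4 = ((y ^ 2 %% 4).+1) %% 4)%N.
  by rewrite -addn1 -modnDml -modnMm Hb mul1n modnDml addn1.
rewrite E E2 in E1.
by case: (sq_mod4 x) E1 => ->; case: (sq_mod4 y) => ->.
Qed.

Section Main.
Variables (n : nat) (L : nat -> nat) (A1 A2 c : nat).
Hypotheses (n2 : (2 <= n)%N) (neven : ~~ odd n)
 (Lpr : forall i, (i < n)%N -> prime (L i))
 (Linj : forall i j, (i < n)%N -> (j < n)%N -> L i = L j -> i = j)
 (L0 : (L 0 %% 4 = 3)%N) (Li : forall i, (1 <= i < n)%N -> (L i %% 4 = 1)%N)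
 (sym : forall j i, (i < n)%N -> (j < n)%N -> i != j -> (1 <= j)%N ->
     ((L i)%:R : 'F_(L j)) ^+ ((L j).-1 %/ 2) = (if (i == 0%N) && (2 <= j)%N then 1 else -1))
 (HA : A1 = A2.+1) (HA2 : (0 < A2)%N)
 (Hc : (A1 * A2 = (\prod_(0 <= i < n) L i) * c ^ 2)%N).

Local Notation M := (\prod_(0 <= i < n) L i)%N.
Let s i := (L i %| A1)%N.
Let d1 := (\prod_(0 <= i < n | s i) L i)%N.
Let d2 := (\prod_(0 <= i < n | ~~ s i) L i)%N.

Lemma Lodd i : (i < n)%N -> odd (L i).
Proof.
move=> ilt. have := modn2 (L i).
have : (L i %% 4 = 1 \/ L i %% 4 = 3)%N.
  case: i ilt => [|i] ilt; [by right | left; apply: Li; lia].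
case: (odd (L i)) => //= H H2. lia.
Qed.

Lemma M_eq : M = (d1 * d2)%N.
Proof. by rewrite /d1 /d2 (bigID s) /=. Qed.

Lemma L_dvd_M i : (i < n)%N -> (L i %| M)%N.
Proof.
move=> ilt. rewrite (big_rem i) ?mem_index_iota //=. exact: dvdn_mulr.
Qed.

Lemma dvd_d1 : (d1 %| A1)%N.
Proof.
apply: dvd_prod_primes; first exact: iota_uniq.
  move=> i j; rewrite !mem_index_iota => /andP[_ ?] /andP[_ ?]. exact: Linj.
by move=> i; rewrite mem_index_iota => /andP[_ ?] si; split => //; apply: Lpr.
Qed.

Lemma dvd_d2 : (d2 %| A2)%N.
Proof.
apply: dvd_prod_primes; first exact: iota_uniq.
  move=> i j; rewrite !mem_index_iota => /andP[_ ?] /andP[_ ?]. exact: Linj.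
move=> i; rewrite mem_index_iota => /andP[_ ilt] nsi; split; first exact: Lpr.
have : (L i %| A1 * A2)%N by rewrite Hc dvdn_mulr // L_dvd_M.
rewrite Euclid_dvdM ?Lpr //; by case/orP => // H; rewrite /s H in nsi.
Qed.

Lemma M_gt0 : (0 < M)%N.
Proof.
have : (0 < A1 * A2)%N by rewrite muln_gt0 HA HA2.
by rewrite Hc muln_gt0 => /andP[].
Qed.

Lemma decomp : exists x y, A1 = (d1 * x ^ 2)%N /\ A2 = (d2 * y ^ 2)%N /\ c = (x * y)%N.
Proof.
set X := (A1 %/ d1)%N. set Y := (A2 %/ d2)%N.
have HX : A1 = (X * d1)%N by rewrite divnK // dvd_d1.
have HY : A2 = (Y * d2)%N by rewrite divnK // dvd_d2.
clearbody X Y.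
have cA : coprime A1 A2 by rewrite HA coprimeSn.
have cXY : coprime X Y.
  apply: (@coprime_dvdl _ A1); first by rewrite HX dvdn_mulr.
  apply: (@coprime_dvdr _ A2); first by rewrite HY dvdn_mulr.
  exact: cA.
have XY : (X * Y = c ^ 2)%N.
  apply/eqP; rewrite -(eqn_pmul2l M_gt0); apply/eqP.
  rewrite -Hc M_eq {1}HX {1}HY. ring.
have X0 : (0 < X)%N by case: (posnP X) HX => [->|//]; rewrite HA.
have Y0 : (0 < Y)%N by case: (posnP Y) HY => [->|//]; rewrite mul0n => E; move: HA2; rewrite E.
have [x Hx] := sq_of_coprime X0 cXY XY.
have [y Hy] : exists y, Y = (y ^ 2)%N.
  apply: (@sq_of_coprime Y X c Y0); [by rewrite coprime_sym | by rewrite mulnC].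
exists x, y. split; first by rewrite HX Hx mulnC.
split; first by rewrite HY Hy mulnC.
apply/eqP; rewrite -(@eqn_exp2r _ _ 2) // -XY Hx Hy. apply/eqP; ring.
Qed.



Lemma s0_false x y : A1 = (d1 * x ^ 2)%N -> A2 = (d2 * y ^ 2)%N -> s 0 = false.
Proof.
move=> H1 H2. apply/negP => s0.
have n0 : (0 < n)%N by lia.
have d1m : (d1 %% 4 = 3)%N.
  rewrite /d1 big_ltn_cond // s0 -modnMm L0 prod_mod4 //.
  by move=> i; rewrite mem_index_iota => /andP[? ?] _; apply: Li; lia.
have d2m : (d2 %% 4 = 1)%N.
  rewrite /d2 big_ltn_cond // s0 /= prod_mod4 //.
  by move=> i; rewrite mem_index_iota => /andP[? ?] _; apply: Li; lia.
apply: (mod4_contra d1m d2m (x := x) (y := y)). by rewrite -H1 -H2.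
Qed.

Lemma L_dvd_d2 j : (j < n)%N -> ~~ s j -> (L j %| d2)%N.
Proof.
move=> jlt nsj. rewrite /d2 (big_rem j) ?mem_index_iota //= nsj. exact: dvdn_mulr.
Qed.

Lemma C1 j x : (1 <= j < n)%N -> ~~ s j -> A1 = (d1 * x ^ 2)%N ->
  ((d1%:R : 'F_(L j)) ^+ ((L j).-1 %/ 2)) = 1.
Proof.
move=> /andP[j1 jn] nsj H1.
have prj := Lpr jn. have oj := Lodd jn.
apply: (C_gen prj oj (Li _) (x := x) (e := 1)); first by rewrite j1.
  by left.
have A20 : ((A2%:R : 'F_(L j)) = 0).
  apply/eqP; rewrite natFp_eq0 //. apply: dvdn_trans (L_dvd_d2 jn nsj) _. exact: dvd_d2.
by rewrite -H1 HA -natr1 A20 add0r.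
Qed.

Lemma C2 j y : (1 <= j < n)%N -> s j -> A2 = (d2 * y ^ 2)%N ->
  ((d2%:R : 'F_(L j)) ^+ ((L j).-1 %/ 2)) = 1.
Proof.
move=> /andP[j1 jn] sj H2.
have prj := Lpr jn. have oj := Lodd jn.
apply: (C_gen prj oj (Li _) (x := y) (e := -1)); first by rewrite j1.
  by right.
have : ((A2%:R : 'F_(L j)) + 1 = 0).
  apply/eqP; rewrite natr1 -HA natFp_eq0 //.
by move/eqP; rewrite addr_eq0 -H2 => /eqP.
Qed.

Lemma pow_prod j (S : pred nat) :
  (((\prod_(0 <= i < n | S i) L i)%N%:R : 'F_(L j)) ^+ ((L j).-1 %/ 2)) =
  \prod_(0 <= i < n | S i) (((L i)%:R : 'F_(L j)) ^+ ((L j).-1 %/ 2)).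
Proof. by rewrite natr_prod prodrXl. Qed.

Lemma main_nat : exists x y, A1 = (x ^ 2)%N /\ A2 = (M * y ^ 2)%N /\ c = (x * y)%N.
Proof.
have [x [y [H1 [H2 H3]]]] := decomp.
case: (boolP (has s (index_iota 0 n))) => hs; last first.
  have d1_1 : d1 = 1%N.
    rewrite /d1 big1_seq // => i /andP[si ir].
    by move/hasPn: hs => /(_ i ir); rewrite si.
  have d2_M : d2 = M.
    rewrite /d2 big_seq_cond [RHS]big_seq_cond. apply: eq_bigl => i.
    case ir: (i \in index_iota 0 n) => //=.
    by move/hasPn: hs => /(_ i ir) ->.
  exists x, y. by rewrite H1 H2 d1_1 d2_M mul1n.
exfalso.
have s0 := s0_false H1 H2.
have n0 : (0 < n)%N by lia.
have iota0 : index_iota 0 n = 0%N :: index_iota 1 n.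
  by rewrite /index_iota subn0 subn1; case: n n0.
have k1_eq : count s (index_iota 0 n) = count s (index_iota 1 n).
  by rewrite iota0 /= s0.
case: (boolP (has (fun j => (1 <= j)%N && ~~ s j) (index_iota 0 n))) => hA.
- case/hasP: hA => j0; rewrite mem_index_iota => /andP[_ j0n] /andP[j01 nsj0].
  have c1 := C1 (x := x) (j := j0) _ nsj0 H1. rewrite j01 j0n in c1.
  have {c1} c1 := c1 isT. rewrite pow_prod big_mkcond /= in c1.
  rewrite -big_mkcond /= in c1.
  rewrite (prod_m1 (P := s)) in c1; last first.
    move=> i; rewrite mem_index_iota => /andP[_ iln] si.
    rewrite sym //; last by apply/eqP => E; rewrite -E si in nsj0.
    by case: (eqVneq i 0) => [E|//]; rewrite E s0 in si.
  move/eqP: c1; rewrite m1_pow_eq1 ?Lpr ?Lodd // => ek1.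
  have k1pos : (0 < count s (index_iota 0 n))%N by rewrite -has_count.
  case: (boolP (has (fun j => (2 <= j)%N && s j) (index_iota 0 n))) => hB; last first.
    have : (count s (index_iota 0 n) <= 1)%N.
      have E : index_iota 0 n = [:: 0%N; 1%N] ++ iota 2 (n - 2).
        rewrite /index_iota subn0 -[in LHS](subnK n2) addnC iotaD //.
      rewrite E count_cat /= s0 /=.
      have -> : count s (iota 2 (n - 2)) = 0%N.
        apply/eqP; rewrite -leqn0 leqNgt -has_count. apply/hasPn => i.
        rewrite mem_iota => /andP[i2 iln]. apply/negP => si.
        move/hasPn: hB => /(_ i). rewrite mem_index_iota i2 si /=.
        have -> : (i < n)%N by lia.
        by move/(_ isT).
      by case: (s 1).
    move: ek1 k1pos. case: (count s (index_iota 0 n)) => [|[|k]] //.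
  case/hasP: hB => j1; rewrite mem_index_iota => /andP[_ j1n] /andP[j12 sj1].
  have j11 : (1 <= j1)%N by lia.
  have c2 := C2 (y := y) (j := j1) _ sj1 H2.
  have {c2} c2 := c2 ltac:(apply/andP; split => //; lia).
  rewrite pow_prod big_ltn_cond // s0 /= sym // ?j12 /= ?mul1r in c2; last by apply/eqP => E; rewrite -E in j12.
  rewrite (prod_m1 (P := fun i => ~~ s i)) in c2; last first.
    move=> i; rewrite mem_index_iota => /andP[i1 iln] nsi.
    rewrite sym //; last by apply/eqP => E; rewrite E sj1 in nsi.
    by case: (eqVneq i 0) => [E|//]; rewrite E in i1.
  move/eqP: c2; rewrite m1_pow_eq1 ?Lpr ?Lodd // => ek2.
  have := count_predC s (index_iota 1 n). rewrite size_iota -k1_eq => E.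
  have : odd (n - 1) = odd (count s (index_iota 0 n) + count (predC s) (index_iota 1 n)) by rewrite E.
  rewrite oddD (negbTE ek1) /=.
  have -> : count (predC s) (index_iota 1 n) = count (fun i => ~~ s i) (index_iota 1 n) by [].
  rewrite (negbTE ek2).
  have : odd n = ~~ odd (n - 1) by rewrite -[in LHS](subnK n0) addn1 /=.
  by rewrite (negbTE neven) => /esym /negbFE ->.
- have s1 : s 1.
    apply/negPn/negP => ns1. move/hasPn: hA => /(_ 1%N). rewrite mem_index_iota ns1 /=.
    by move/(_ n2).
  have c2 := C2 (y := y) (j := 1) _ s1 H2.
  have {c2} c2 := c2 ltac:(apply/andP; split => //).
  rewrite pow_prod big_ltn_cond // s0 /= sym // /= in c2.
  rewrite big1_seq ?mulr1 in c2; last first.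
    move=> i /andP[nsi]; rewrite mem_index_iota => /andP[i1 iln].
    move/hasPn: hA => /(_ i). rewrite mem_index_iota iln nsi i1 /=.
    by move/(_ isT).
  move/eqP: c2. rewrite eq_sym (negbTE (oneFp_neq_m1 (Lpr n2) (Lodd n2))).
  done.
Qed.

End Main.

End MC.
Import MC.
Delimit Scope Z_scope with Z.
Delimit Scope R_scope with R.

Module Glue.
Local Open Scope ring_scope.

Lemma Zofnat_mod A P : (0 < P)%N -> Z.of_nat (A %% P) = (Z.of_nat A mod Z.of_nat P)%Z.
Proof.
move=> P0. have E := divn_eq A P. have L := ltn_pmod A P0.
apply: (@Z.mod_unique _ _ (Z.of_nat (A %/ P))); [left; lia | lia].
Qed.

Lemma prime_Z_nat (p : Z) : Znumtheory.prime p -> prime (Z.to_nat p).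
Proof.
move=> pp. have p2 := prime_ge_2 _ pp.
apply/primeP; split; first lia.
move=> d /dvdnP [k Hk].
have : (Z.of_nat d | p)%Z.
  exists (Z.of_nat k). have : Z.of_nat (Z.to_nat p) = Z.of_nat (k * d) by rewrite Hk.
  rewrite Z2Nat.id; [lia|lia].
move/(prime_divisors _ pp) => H. apply/orP.
case: H => [E|[E|[E|E]]]; [lia | left; apply/eqP; lia | right; apply/eqP; lia | lia].
Qed.

Lemma val_FpM P (pr : prime P) (x y : 'F_P) :
  nat_of_ord (x * y) = ((nat_of_ord x * nat_of_ord y) %% P)%N.
Proof. by rewrite /=; congr (modn _ _); apply: Fp_cast. Qed.

Lemma leg_nz (P A : nat) : prime P -> (Z.of_nat A mod Z.of_nat P =? 0)%Z = false ->
  (A%:R : 'F_P) != 0.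
Proof.
move=> pr E0. rewrite natFp_eq0 //. apply/negP => dv.
have : (A %% P = 0)%N by apply/eqP.
move=> H. move: E0. rewrite -Zofnat_mod ?prime_gt0 // H. by [].
Qed.

Lemma leg_m1 (P A : nat) : prime P -> odd P ->
  legendre (Z.of_nat A) (Z.of_nat P) = (-1)%Z -> (A%:R : 'F_P) ^+ (P.-1 %/ 2) = -1.
Proof.
move=> pr po. rewrite /legendre.
case E0: (Z.eqb _ 0) => //.
case: excluded_middle_informative => // nq _.
apply: euler_nsq => //; first exact: leg_nz.
move=> [y Hy]. apply: nq. exists (Z.of_nat y).
have H : ((y * y) %% P = A %% P)%N.
  have := congr1 (@nat_of_ord _) Hy. by rewrite val_Fp_nat // val_FpM.
have HZ := congr1 Z.of_nat H. rewrite !Zofnat_mod ?prime_gt0 // in HZ.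
rewrite Zminus_mod. rewrite Nat2Z.inj_mul in HZ. rewrite HZ Z.sub_diag. by [].
Qed.

Lemma leg_p1 (P A : nat) : prime P -> odd P ->
  legendre (Z.of_nat A) (Z.of_nat P) = 1%Z -> (A%:R : 'F_P) ^+ (P.-1 %/ 2) = 1.
Proof.
move=> pr po. rewrite /legendre.
case E0: (Z.eqb _ 0) => //.
case: excluded_middle_informative => // q _.
have P0 : (0 < Z.of_nat P)%Z by have := prime_gt0 pr; lia.
case: q => x Hx.
set X := Z.to_nat (x mod Z.of_nat P).
have HX : Z.of_nat X = (x mod Z.of_nat P)%Z.
  rewrite /X Z2Nat.id //. by have := Z.mod_pos_bound x _ P0; lia.
apply: (@euler_sq P pr po _ (X%:R)); last exact: leg_nz.
rewrite -natrM -[LHS]Fp_nat_mod // -[RHS]Fp_nat_mod //. congr (_%:R).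
apply: Nat2Z.inj. rewrite !Zofnat_mod ?prime_gt0 // Nat2Z.inj_mul HX.
rewrite -Z.mul_mod //; last by lia.
have -> : (x * x = (x * x - Z.of_nat A) + Z.of_nat A)%Z by ring.
by rewrite Zplus_mod Hx Z.add_0_l Zmod_mod.
Qed.

Lemma prod_Z (l : nat -> Z) (k n : nat) :
  (forall i, (k <= i < k + n)%N -> (0 <= l i)%Z) ->
  Z.of_nat (\prod_(i <- iota k n) Z.to_nat (l i))%N = List.fold_right Z.mul 1%Z (List.map l (List.seq k n)).
Proof.
elim: n k => [|n IH] k H; first by rewrite big_nil.
rewrite /= big_cons Nat2Z.inj_mul IH; last by move=> i /andP[? ?]; apply: H; lia.
rewrite Z2Nat.id //. apply: H. lia.
Qed.

End Glue.
Import Glue.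

Module Final.
Local Open Scope ring_scope.

Lemma odd_L (x : nat) : ((x %% 4 = 1) \/ (x %% 4 = 3))%N -> odd x.
Proof. move=> H. have := modn2 x. case: (odd x) => //= H2. lia. Qed.

Section Sym.
Variables (n : nat) (l : nat -> Z).
Let L i := Z.to_nat (l i).
Hypotheses (lL : forall i, (i < n)%N -> l i = Z.of_nat (L i))
 (Lpr : forall i, (i < n)%N -> prime (L i))
 (Linj : forall i j, (i < n)%N -> (j < n)%N -> L i = L j -> i = j)
 (L0 : (L 0 %% 4 = 3)%N) (Li : forall i, (0 < i < n)%N -> (L i %% 4 = 1)%N)
 (leg01 : legendre (l 0%N) (l 1%N) = (-1)%Z)
 (leg0j : forall j, le 3 (S j) /\ le (S j) n -> legendre (l 0%N) (l j) = 1%Z)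
 (legij : forall i j, le 1 i -> lt i j -> lt j n -> legendre (l i) (l j) = (-1)%Z).

Lemma Lodd' i : (i < n)%N -> odd (L i).
Proof.
move=> ilt. apply: odd_L. case: i ilt => [|i] ilt; [by right | left; apply: Li; lia].
Qed.

Lemma sym_ok j i : (i < n)%N -> (j < n)%N -> i != j -> (0 < j)%N ->
  (((L i)%:R : 'F_(L j)) ^+ ((L j).-1 %/ 2)) = (if (i == 0%N) && (1 < j)%N then 1 else -1).
Proof.
move=> ilt jlt ij j0.
have prj := Lpr jlt. have oj := Lodd' jlt.
case: (ltngtP i j) => [lt_ij|lt_ji|E]; last by rewrite E eqxx in ij.
- case: (eqVneq i 0%N) => [i0|inz].
 + subst i. case: (ltngtP 1 j) => [j2|j1|j1].
    * rewrite /=. apply: leg_p1 => //. rewrite -!lL //. apply: leg0j. lia.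
    * lia.
    * move: prj oj jlt. rewrite -j1 => prj oj jlt. apply: leg_m1 => //. by rewrite -!lL.
  + rewrite /=. apply: leg_m1 => //. rewrite -!lL //. apply: legij; lia.
- rewrite (_ : (i == 0%N) = false) /=; last by apply/negbTE; rewrite -lt0n; apply: leq_trans lt_ji.
  have pri := Lpr ilt. have oi := Lodd' ilt.
  have H1 : ((L j)%:R : 'F_(L i)) ^+ ((L i).-1 %/ 2) = -1.
    apply: leg_m1 => //. rewrite -!lL //. apply: legij; lia.
  have Lji : L j != L i by apply/eqP => E; have := Linj jlt ilt E; lia.
  have := qr_power prj pri oj oi Lji (Li _); rewrite j0 jlt H1 => /(_ isT).
  have e := oneFp_neq_m1 pri oi. rewrite eq_sym in e. rewrite (negbTE e) => H.
  have nz : ((L i)%:R : 'F_(L j)) != 0.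
    by rewrite natFp_eq0 // dvdn_prime2.
  case: (halfpow_pm1 prj oj nz) => // E. by rewrite E eqxx in H.
Qed.

End Sym.

End Final.
Import Final.

Theorem lemma5p3 (m a b : Z) :
  deng_li m ->
  fundamental_unit m (IZR a + IZR b * sqrt (IZR m))%R ->
  Z.odd b = true.
Proof.
move=> [n [l [n2 [nev [lpr [ldis [l0 [li [leg01 [leg0j [legij Hm]]]]]]]]]]] Hfu.
pose L i := Z.to_nat (l i).
have lpos : forall i, (i < n)%N -> (2 <= l i)%Z.
  move=> i ilt. apply: prime_ge_2. apply: lpr. by apply/ltP.
have lL : forall i, (i < n)%N -> l i = Z.of_nat (L i).
  move=> i ilt. rewrite /L Z2Nat.id //. have := lpos i ilt. lia.
have Lpr : forall i, (i < n)%N -> prime (L i).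
  move=> i ilt. apply: prime_Z_nat. apply: lpr. by apply/ltP.
have Linj : forall i j, (i < n)%N -> (j < n)%N -> L i = L j -> i = j.
  move=> i j ilt jlt E. case: (Nat.eq_dec i j) => // ne. exfalso.
  apply: (ldis i j (ltP ilt) (ltP jlt) ne). by rewrite (lL i ilt) (lL j jlt) E.
have n2' : (1 < n)%N by lia.
have L0 : (L 0 %% 4 = 3)%N.
  apply: Nat2Z.inj. rewrite Zofnat_mod // -lL; last lia.
  have -> : Z.of_nat 4 = 4%Z by []. have -> : Z.of_nat 3 = 3%Z by []. exact: mod8_4 l0.
have Li : forall i, (0 < i < n)%N -> (L i %% 4 = 1)%N.
  move=> i /andP[i0 ilt]. apply: Nat2Z.inj. rewrite Zofnat_mod // -lL; last lia.
  have -> : Z.of_nat 4 = 4%Z by []. have -> : Z.of_nat 1 = 1%Z by [].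
  have := li i ltac:(lia). exact: mod8_4'.
have neven : ~~ odd n.
  apply/negP => on. have := modn2 n. rewrite on. case: nev => k Hk. lia.
have sym := sym_ok lL Lpr Linj L0 Li leg01 leg0j legij.
set M := (\prod_(0 <= i < n) L i)%N.
have HmM : Z.of_nat M = m.
  rewrite Hm /prod_first /M /index_iota subn0 prod_Z //.
  move=> i /andP[_ ilt]. have := lpos i ilt. lia.
have M4 : (M %% 4 = 3)%N.
  rewrite /M big_ltn ?(leq_trans _ n2') // -modnMm L0 prod_mod4 //.
  by move=> i; rewrite mem_index_iota => /andP[? ?] _; apply: Li; lia.
have Hm4 : (m mod 4 = 3)%Z.
  have := congr1 Z.of_nat M4. rewrite Zofnat_mod // HmM. by [].
have Hm0 : (0 < m)%Z by rewrite -HmM; lia.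
case: Hfu => [Hu [H1 Hmin]].
have Hn := unit_norm m a b Hm4 Hm0 Hu.
have [a1 b1] := unit_pos m a b Hm0 Hn H1.
case Hb: (Z.odd b) => //. exfalso.
have Hb2 := Zmod_odd b. rewrite Hb in Hb2.
set c := (b / 2)%Z.
have bc : b = (2 * c)%Z.
  have := Z.div_mod b 2 ltac:(lia). rewrite Hb2 /c. lia.
have Ha2 := Zmod_odd a.
case Ha: (Z.odd a) in Ha2; last first.
  have ad : a = (2 * (a / 2))%Z.
    have := Z.div_mod a 2 ltac:(lia). rewrite Ha2. lia.
  move: Hn. rewrite ad bc. lia.
set k := (a / 2)%Z.
have ak : a = (2 * k + 1)%Z.
  have := Z.div_mod a 2 ltac:(lia). rewrite Ha2 /k. lia.
have Hk : (k * k + k = m * (c * c))%Z by move: Hn; rewrite ak bc; lia.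
have c1 : (1 <= c)%Z by lia.
have k0 : (0 <= k)%Z by lia.
have k1 : (1 <= k)%Z by nia.
have HA : Z.to_nat (k + 1) = (Z.to_nat k).+1 by lia.
have HA2 : (0 < Z.to_nat k)%N by lia.
have Hc : (Z.to_nat (k + 1) * Z.to_nat k = M * Z.to_nat c ^ 2)%N.
  rewrite -mulnn. apply: Nat2Z.inj. rewrite !Nat2Z.inj_mul HmM !Z2Nat.id; lia.
have [x [y [Hx [Hy Hxy]]]] := main_nat n2' neven Lpr Linj L0 Li sym HA HA2 Hc.
rewrite -mulnn in Hx. rewrite -mulnn in Hy.
have HX : (k + 1 = Z.of_nat x * Z.of_nat x)%Z.
  have := congr1 Z.of_nat Hx. rewrite Z2Nat.id; last lia. by rewrite Nat2Z.inj_mul.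
have HY : (k = m * (Z.of_nat y * Z.of_nat y))%Z.
  have := congr1 Z.of_nat Hy. rewrite Z2Nat.id; last lia. by rewrite !Nat2Z.inj_mul HmM.
have HXY : (c = Z.of_nat x * Z.of_nat y)%Z.
  have := congr1 Z.of_nat Hxy. rewrite Z2Nat.id; last lia. by rewrite Nat2Z.inj_mul.
have X1 : (1 <= Z.of_nat x)%Z by nia.
have Y1 : (1 <= Z.of_nat y)%Z.
  case: (Z.eq_dec (Z.of_nat y) 0) => [E|E]; last lia.
  rewrite E in HY. lia.
apply: (final_contra m a b (Z.of_nat x) (Z.of_nat y) _ Hm0 X1 Y1); first by split.
- lia.
- lia.
- rewrite bc HXY. lia.
Qed.
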